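(* Let $p,q,r$ be CPC patterns and $\rho,\vartheta,\theta$ substitutions. If $p,{\sf id}_{{\sf bn}(p)}\sqsubseteq q,\rho$ and $\{p\,\|\,r\}=(\vartheta,\theta)$, then $\{q\,\|\,r\}=(\vartheta[\rho],\theta)$.
   Context: CPC patterns over a countable set of names: $p ::= \lambda x \mid x \mid \ulcorner x\urcorner \mid p\bullet p$ (binding name, variable name, protected name, compound). ${\sf bn}(p)$, ${\sf vn}(p)$, ${\sf pn}(p)$ are the sets of binding, variable and protected names of $p$; ${\sf fn}(p)={\sf vn}(p)\cup{\sf pn}(p)$. Patterns are well formed (binding names pairwise distinct and distinct from free names). Communicable patterns contain no protected or binding names; protection extends to them by $\ulcorner p\bullet q\urcorner=\ulcorner p\urcorner\bullet\ulcorner q\urcorner$. A substitution is a finite partial function from names to communicable patterns, applied to patterns by $\sigma x=\sigma(x)$ if $x\in{\sf dom}(\sigma)$ else $x$; $\sigma\ulcorner x\urcorner=\ulcorner\sigma(x)\urcorner$ if $x\in{\sf dom}(\sigma)$ else $\ulcorner x\urcorner$; $\sigma(\lambda x)=\lambda x$; $\sigma(p\bullet q)=\sigma p\bullet\sigma q$. ${\sf id}_X$ is the identity substitution on a finite set $X$. $\hat\sigma$ acts by $\hat\sigma x=x$, $\hat\sigma\ulcorner x\urcorner=\ulcorner x\urcorner$, $\hat\sigma(\lambda x)=\sigma(x)$ if $x\in{\sf dom}(\sigma)$ else $\lambda x$, $\hat\sigma(p\bullet q)=\hat\sigma p\bullet\hat\sigma q$. For substitutions $\vartheta,\rho$, $\vartheta[\rho]$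 is the substitution with domain ${\sf dom}(\rho)$ mapping each $x$ to $\vartheta(\rho(x))$. Unification $\{p\,\|\,q\}$ is a pair of substitutions or undefined: $\{x\|x\}=\{x\|\ulcorner x\urcorner\}=\{\ulcorner x\urcorner\|x\}=\{\ulcorner x\urcorner\|\ulcorner x\urcorner\}=(\{\},\{\})$; $\{\lambda x\|q\}=(\{q/x\},\{\})$ if $q$ is communicable; $\{p\|\lambda x\}=(\{\},\{p/x\})$ if $p$ is communicable; $\{p_1\bullet p_2\|q_1\bullet q_2\}=(\sigma_1\cup\sigma_2,\rho_1\cup\rho_2)$ if $\{p_i\|q_i\}=(\sigma_i,\rho_i)$ for $i=1,2$; undefined otherwise. A match $(p,\sigma)$ is a pattern $p$ and substitution $\sigma$ with ${\sf dom}(\sigma)={\sf bn}(p)$. Compatibility $p,\sigma\sqsubseteq q,\rho$ is the least relation between matches with: $p,\sigma\sqsubseteq\lambda y,\{\hat\sigma p/y\}$ if ${\sf fn}(p)=\emptyset$; $n,\{\}\sqsubseteq n,\{\}$; $\ulcorner n\urcorner,\{\}\sqsubseteq\ulcorner n\urcorner,\{\}$; $\ulcorner n\urcorner,\{\}\sqsubseteq n,\{\}$; $p_1\bullet p_2,\sigma_1\cup\sigma_2\sqsubseteq q_1\bullet q_2,\rho_1\cup\rho_2$ if $p_i,\sigma_i\sqsubseteq q_i,\rho_i$ for $i=1,2$. *)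

(* Defs.v *)
From mathcomp Require Import all_boot.
Set Implicit Arguments. Unset Strict Implicit. Unset Printing Implicit Defensive.

Definition name := nat.

(* CPC patterns: p ::= \x (binding) | x (variable) | [x] (protected) | p . p *)
Inductive pat : Type :=
| PBind : name -> pat
| PVar  : name -> pat
| PProt : name -> pat
| PComp : pat -> pat -> pat.

Fixpoint bn (p : pat) : seq name :=
  match p with PBind x => [:: x] | PComp p1 p2 => bn p1 ++ bn p2 | _ => [::] end.
Fixpoint vn (p : pat) : seq name :=
  match p with PVar x => [:: x] | PComp p1 p2 => vn p1 ++ vn p2 | _ => [::] end.
Fixpoint pn (p : pat) : seq name :=
  match p with PProt x => [:: x] | PComp p1 p2 => pn p1 ++ pn p2 | _ => [::] end.
Definition fn (p : pat) : seq name := vn p ++ pn p.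

Definition wf (p : pat) : bool :=
  uniq (bn p) && all (fun x => x \notin fn p) (bn p).

Fixpoint communicable (p : pat) : bool :=
  match p with PVar _ => true | PComp p1 p2 => communicable p1 && communicable p2
  | _ => false end.

Fixpoint protect (p : pat) : pat :=
  match p with
  | PVar x => PProt x
  | PComp p1 p2 => PComp (protect p1) (protect p2)
  | q => q
  end.

(* Substitutions: finite partial functions from names to communicable patterns,
   represented as functions name -> option pat; equality of substitutions is
   extensional (=1). *)
Definition subst := name -> option pat.

Definition is_subst (s : subst) : Prop :=
  (exists l : seq name, forall x, s x <> None -> x \in l) /\
  (forall x v, s x = Some v -> communicable v).

Definition sempty : subst := fun _ => None.
Definition single (x : name) (v : pat) : subst :=
  fun y => if y == x then Some v else None.
Definition sunion (s1 s2 : subst) : subst :=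
  fun x => match s1 x with Some v => Some v | None => s2 x end.
Definition id_on (X : seq name) : subst :=
  fun x => if x \in X then Some (PVar x) else None.

Fixpoint sapp (s : subst) (p : pat) : pat :=
  match p with
  | PVar x => match s x with Some v => v | None => PVar x end
  | PProt x => match s x with Some v => protect v | None => PProt x end
  | PBind x => PBind x
  | PComp p1 p2 => PComp (sapp s p1) (sapp s p2)
  end.

Fixpoint shat (s : subst) (p : pat) : pat :=
  match p with
  | PVar x => PVar x
  | PProt x => PProt x
  | PBind x => match s x with Some v => v | None => PBind x end
  | PComp p1 p2 => PComp (shat s p1) (shat s p2)
  end.

Definition scomp (t r : subst) : subst := fun x => omap (sapp t) (r x).

Fixpoint unify (p q : pat) : option (subst * subst) :=
  match p, q with
  | PBind x, _ => if communicable q then Some (single x q, sempty) else None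
  | _, PBind y => if communicable p then Some (sempty, single y p) else None
  | PComp p1 p2, PComp q1 q2 =>
      match unify p1 q1, unify p2 q2 with
      | Some (s1, r1), Some (s2, r2) => Some (sunion s1 s2, sunion r1 r2)
      | _, _ => None
      end
  | PVar x, PVar y | PVar x, PProt y | PProt x, PVar y | PProt x, PProt y =>
      if x == y then Some (sempty, sempty) else None
  | _, _ => None
  end.

Definition unif_eq (p q : pat) (s t : subst) : Prop :=
  exists s' t', unify p q = Some (s', t') /\ s' =1 s /\ t' =1 t.

Definition is_match (p : pat) (s : subst) : Prop :=
  is_subst s /\ forall x, s x <> None <-> x \in bn p.

Inductive compat : pat -> subst -> pat -> subst -> Prop :=
| compat_bind p s y r :
    is_match p s -> fn p = [::] -> r =1 single y (shat s p) ->
    compat p s (PBind y) r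
| compat_var n s r : s =1 sempty -> r =1 sempty -> compat (PVar n) s (PVar n) r
| compat_prot n s r : s =1 sempty -> r =1 sempty -> compat (PProt n) s (PProt n) r
| compat_protvar n s r : s =1 sempty -> r =1 sempty -> compat (PProt n) s (PVar n) r
| compat_comp p1 p2 q1 q2 s1 s2 r1 r2 s r :
    compat p1 s1 q1 r1 -> compat p2 s2 q2 r2 ->
    s =1 sunion s1 s2 -> r =1 sunion r1 r2 ->
    compat (PComp p1 p2) s (PComp q1 q2) r.

(* Main.v *)
Require Import Defs.
From mathcomp Require Import all_boot.
Set Implicit Arguments. Unset Strict Implicit.

Lemma uniq_split (l1 l2 : seq name) : uniq (l1 ++ l2) ->
  [/\ uniq l1, uniq l2 & forall x, x \in l1 -> x \in l2 -> False].
Proof.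
rewrite cat_uniq => /and3P [u1 h u2]; split => // x x1 x2.
move/negP: h; apply; apply/hasP; by exists x.
Qed.

Lemma sapp_agree s s' p : (forall x, x \in vn p ++ pn p -> s x = s' x) ->
  sapp s p = sapp s' p.
Proof.
elim: p => [x|x|x|p1 IH1 p2 IH2] /= H //.
- by rewrite (H x) // inE.
- by rewrite (H x) // inE.
- rewrite IH1 ?IH2 // => x hx; apply H; move: hx; rewrite !mem_cat;
  by case/orP => ->; rewrite ?orbT.
Qed.

Lemma shat_ext s s' p : s =1 s' -> shat s p = shat s' p.
Proof. move=> H; elim: p => //= [x|p1 IH1 p2 IH2]; [by rewrite H | by rewrite IH1 IH2]. Qed.

Lemma shat_names X p x :
  x \in vn (shat (id_on X) p) ++ pn (shat (id_on X) p) -> x \in fn p ++ bn p.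
Proof.
rewrite /fn; elim: p => [y|y|y|p1 IH1 p2 IH2] /=.
- rewrite /id_on; case: ifP => //= _; by rewrite !inE.
- by rewrite !inE.
- by rewrite !inE.
- move: IH1 IH2; rewrite !mem_cat; by do !case: (_ \in _).
Qed.

Lemma comm_fn p : communicable p -> vn p != [::].
Proof.
elim: p => //= p1 IH1 p2 IH2 /andP[/IH1 h _]; by case: (vn p1) h.
Qed.

Lemma fn_comp p1 p2 : fn (PComp p1 p2) = [::] -> fn p1 = [::] /\ fn p2 = [::].
Proof.
rewrite /fn /=; case: (vn p1) => [|? ?] //=; case: (vn p2) => [|? ?] //=;
case: (pn p1) => [|? ?] //=; case: (pn p2) => [|? ?] //=.
Qed.

Lemma unify_dom p u s t x : unify p u = Some (s, t) -> s x <> None -> x \in bn p.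
Proof.
elim: p u s t => [y|y|y|p1 IH1 p2 IH2] u s t /=.
- case: ifP => // _ [<- _]; rewrite /single inE; by case: (x == y).
- case: u => [m|m|m|u1 u2] //=; try (case: ifP => // _); by case => <- _.
- case: u => [m|m|m|u1 u2] //=; try (case: ifP => // _); by case => <- _.
- case: u => [m|m|m|u1 u2] //=; first (case: ifP => // _; by case => <- _).
  case E1: (unify p1 u1) => [[s1 t1]|] //; case E2: (unify p2 u2) => [[s2 t2]|] //.
  case => <- _; rewrite /sunion mem_cat.
  case E: (s1 x) => [v|].
  + by rewrite (IH1 _ _ _ E1) // E.
  + by move=> /(IH2 _ _ _ E2) ->; rewrite orbT.
Qed.

Lemma dom_none (s : subst) (l : seq name) x : (forall x, s x <> None -> x \in l) ->
  x \notin l -> s x = None.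
Proof. move=> D /negP nx; case E: (s x) => [v|] //; exfalso; apply: nx; apply/D; by rewrite E. Qed.

Lemma compat_dom p s q r : compat p s q r -> forall x, s x <> None <-> x \in bn p.
Proof.
elim => {p s q r} /=.
- by move=> p s y r [_ D].
- by move=> n s r Hs _ x; rewrite Hs in_nil; split => // [[]].
- by move=> n s r Hs _ x; rewrite Hs in_nil; split => // [[]].
- by move=> n s r Hs _ x; rewrite Hs in_nil; split => // [[]].
- move=> p1 p2 q1 q2 s1 s2 r1 r2 s r _ D1 _ D2 Hs _ x.
  have := D1 x; have := D2 x; rewrite Hs /sunion mem_cat.
  case: (s1 x) => [v|]; case: (s2 x) => [w|] //=.
  + by move=> _ [h _]; rewrite h.
  + by move=> _ [h _]; rewrite h.
  + by move=> [h _] _; rewrite h ?orbT.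
  + move=> [_ h2] [_ h1]; split => // /orP [/h1 | /h2] //.
Qed.

Lemma split_id p1 p2 s1 s2 (s : subst) : uniq (bn p1 ++ bn p2) ->
  (forall x, s1 x <> None <-> x \in bn p1) ->
  (forall x, s2 x <> None <-> x \in bn p2) ->
  s =1 sunion s1 s2 -> s =1 id_on (bn p1 ++ bn p2) ->
  s1 =1 id_on (bn p1) /\ s2 =1 id_on (bn p2).
Proof.
move=> /uniq_split [_ _ dj] D1 D2 Hs Hid; split => x.
- case h1: (x \in bn p1).
  + have := Hid x; rewrite Hs /sunion /id_on mem_cat h1 /=.
    case E: (s1 x) => [v|] //; exfalso; by move/D1: h1; rewrite E.
  + by rewrite /id_on h1 (@dom_none _ _ _ (fun y => proj1 (D1 y))) ?h1.
- case h2: (x \in bn p2).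
  + have h1 : x \notin bn p1 by apply/negP => h1; exact: dj h1 h2.
    have := Hid x; rewrite Hs /sunion /id_on mem_cat h2 orbT (@dom_none _ _ _ (fun y => proj1 (D1 y))) //.
  + by rewrite /id_on h2 (@dom_none _ _ _ (fun y => proj1 (D2 y))) ?h2.
Qed.

Lemma L_rho p s q r : compat p s q r -> uniq (bn p) -> s =1 id_on (bn p) ->
  forall x v z, r x = Some v -> z \in vn v ++ pn v -> z \in bn p.
Proof.
elim => {p s q r}.
- move=> p s y r _ Hf Hr _ Hs x v z; rewrite Hr /single; case: ifP => // _ [<-].
  rewrite (@shat_ext _ _ _ Hs) => /shat_names; by rewrite Hf.
- by move=> n s r _ Hr _ _ x v z; rewrite Hr.
- by move=> n s r _ Hr _ _ x v z; rewrite Hr.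
- by move=> n s r _ Hr _ _ x v z; rewrite Hr.
- move=> p1 p2 q1 q2 s1 s2 r1 r2 s r C1 IH1 C2 IH2 Hs Hr /= U Hid.
  have [I1 I2] := split_id U (compat_dom C1) (compat_dom C2) Hs Hid.
  have [U1 U2 _] := uniq_split U.
  move=> x v z; rewrite Hr /sunion; case E: (r1 x) => [w|].
  + by case => <- hz; rewrite mem_cat (IH1 U1 I1 _ _ z E hz).
  + by move=> E2 hz; rewrite mem_cat (IH2 U2 I2 _ _ z E2 hz) orbT.
Qed.

Lemma L_comm p s q r : communicable p -> compat p s q r -> q = p /\ r =1 sempty.
Proof.
move=> Hc H; elim: H Hc => {p s q r}.
- move=> p s y r _ Hf _ Hc; exfalso; move: Hf; rewrite /fn.
  by case: (vn p) (comm_fn Hc).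
- by [].
- by [].
- by [].
- move=> p1 p2 q1 q2 s1 s2 r1 r2 s r _ IH1 _ IH2 _ Hr /= /andP [c1 c2].
  have [-> R1] := IH1 c1; have [-> R2] := IH2 c2; split => // x.
  by rewrite Hr /sunion R1 R2.
Qed.

Lemma L_bind p : forall X u s t, {subset bn p <= X} -> fn p = [::] ->
  uniq (bn p) -> unify p u = Some (s, t) ->
  [/\ communicable u, t =1 sempty & sapp s (shat (id_on X) p) = u].
Proof.
elim: p => [y|y|y|p1 IH1 p2 IH2] X u s t HX Hf U /=.
- case: ifP => // cu [<- <-]; split => //.
  by rewrite /id_on HX ?mem_head //= /single eqxx.
- by [].
- by [].
- have [F1 F2] := fn_comp Hf.
  have [U1 U2 dj] := uniq_split U.
  case: u => [m|m|m|u1 u2] //=.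
  + case: ifP => // /andP [c1 _]; exfalso; move: F1; rewrite /fn.
    by case: (vn p1) (comm_fn c1).
  + case E1: (unify p1 u1) => [[s1 t1]|] //; case E2: (unify p2 u2) => [[s2 t2]|] //.
    case => <- <-.
    have [c1 T1 S1] := IH1 X _ _ _ (fun z h => HX z ltac:(by rewrite mem_cat h)) F1 U1 E1.
    have [c2 T2 S2] := IH2 X _ _ _ (fun z h => HX z ltac:(by rewrite mem_cat h orbT)) F2 U2 E2.
    split; first by rewrite c1 c2.
    * by move=> z; rewrite /sunion T1 T2.
    * congr PComp.
      - rewrite -[RHS]S1; apply: sapp_agree => z /shat_names; rewrite F1 /= => hz.
        rewrite /sunion; case: (s1 z) => //; apply: (@dom_none _ _ _ (fun w h => unify_dom E2 h)).
        by apply/negP => h; exact: dj hz h.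
      - rewrite -[RHS]S2; apply: sapp_agree => z /shat_names; rewrite F2 /= => hz.
        rewrite /sunion (@dom_none _ _ _ (fun w h => unify_dom E1 h)) //.
        by apply/negP => h; exact: dj h hz.
Qed.

Lemma L_main p s q rho : compat p s q rho -> uniq (bn p) -> s =1 id_on (bn p) ->
  forall u vt th, unify p u = Some (vt, th) ->
  exists a b, unify q u = Some (a, b) /\ a =1 scomp vt rho /\ b =1 th.
Proof.
move=> C; elim: C => {p s q rho}.
- move=> p s y r _ Hf Hr U Hs u vt th E.
  have [cu T S] := L_bind (X := bn p) (fun z h => h) Hf U E.
  exists (single y u), sempty; split; first by rewrite /= cu.
  split; last by move=> z; rewrite T.
  move=> z; rewrite /scomp Hr /single; case: ifP => //= _.
  by rewrite (@shat_ext _ _ _ Hs) S.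
- move=> n s r _ Hr _ _ u vt th E; exists vt, th; split => //; split => // z.
  rewrite /scomp Hr /=; apply: (@dom_none _ _ _ (fun w h => unify_dom E h)) => //.
- move=> n s r _ Hr _ _ u vt th E; exists vt, th; split => //; split => // z.
  rewrite /scomp Hr /=; apply: (@dom_none _ _ _ (fun w h => unify_dom E h)) => //.
- move=> n s r _ Hr _ _ u vt th E; exists vt, th.
  have Hv : vt =1 sempty by move=> z; apply: (@dom_none _ _ _ (fun w h => unify_dom E h)).
  split; last by split => // z; rewrite Hv /scomp Hr.
  by move: E; case: u => [m|m|m|u1 u2] //=.
- move=> p1 p2 q1 q2 s1 s2 r1 r2 s r C1 IH1 C2 IH2 Hs Hr /= U Hid.
  have [I1 I2] := split_id U (compat_dom C1) (compat_dom C2) Hs Hid.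
  have [U1 U2 dj] := uniq_split U.
  case => [m|m|m|u1 u2] vt th //=.
  + case: ifP => // /andP [c1 c2] [<- <-].
    have [-> R1] := L_comm c1 C1; have [-> R2] := L_comm c2 C2.
    exists sempty, (single m (PComp p1 p2)); rewrite /= c1 c2; split => //; split => // z.
    by rewrite /scomp Hr /sunion R1 R2.
  + case E1: (unify p1 u1) => [[s1' t1]|] //; case E2: (unify p2 u2) => [[s2' t2]|] //.
    case => <- <-.
    have [a1 [b1 [F1 [A1 B1]]]] := IH1 U1 I1 _ _ _ E1.
    have [a2 [b2 [F2 [A2 B2]]]] := IH2 U2 I2 _ _ _ E2.
    exists (sunion a1 a2), (sunion b1 b2); rewrite F1 F2; split => //; split => z.
    * rewrite /sunion A1 A2 /scomp Hr /sunion.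
      case R1: (r1 z) => [v|] /=.
      - congr Some; apply: sapp_agree => w hw.
        have hw1 := L_rho C1 U1 I1 R1 hw.
        rewrite /sunion; case: (s1' w) => //; symmetry; apply: (@dom_none _ _ _ (fun w h => unify_dom E2 h)).
        by apply/negP => h; exact: dj hw1 h.
      - case R2: (r2 z) => [v|] //=; congr Some; apply: sapp_agree => w hw.
        have hw2 := L_rho C2 U2 I2 R2 hw.
        rewrite /sunion (@dom_none _ _ _ (fun w h => unify_dom E1 h)) //.
        by apply/negP => h; exact: dj h hw2.
    * by rewrite /sunion B1 B2.
Qed.

Theorem proposition3p21 (p q r : pat) (rho vt th : subst) :
  wf p -> wf q -> wf r ->
  is_subst rho -> is_subst vt -> is_subst th ->
  compat p (id_on (bn p)) q rho ->
  unif_eq p r vt th ->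
  unif_eq q r (scomp vt rho) th.
Proof.
move=> /andP [U _] _ _ _ _ _ C [vt' [th' [E [V T]]]].
have [a [b [F [A B]]]] := L_main C U (fun x => erefl) E.
exists a, b; split => //; split => z; last by rewrite B T.
rewrite A /scomp; case: (rho z) => //= v; congr Some; apply: sapp_agree => w _; exact: V.
Qed.
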